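(* Let $M=[a_{ij},b_{ij}]_{i,j\in\{1,2\}}$ and $\widehat M=[\hat a_{ij},\hat b_{ij}]_{i,j\in\{1,2\}}$ be $2\times2$ 2-person normal form game matrices and put $c_{ij}=\hat a_{ij}-a_{ij}$. Then $\widehat M$ can be obtained from $M$ by an OI-transformation if and only if $a_{ij}+b_{ij}=\hat a_{ij}+\hat b_{ij}$ for all $i,j\in\{1,2\}$ and $c_{11}+c_{22}=c_{12}+c_{21}$.
   Context: A 2-person normal form game matrix of dimensions $n\times m$ is $M=[a_{ij},b_{ij}]_{i\le n,\,j\le m}$, where $(a_{ij},b_{ij})\in\mathbb{R}^2$ are the payoffs of the row player $A$ and column player $B$ when $A$ plays strategy $A_i$ and $B$ plays $B_j$. A preplay offer by $A$ to $B$ of amount $\delta\ge 0$ contingent on $B_j$ replaces $(a_{ij},b_{ij})$ by $(a_{ij}-\delta,b_{ij}+\delta)$ for every $i$ (other entries unchanged); a preplay offer by $B$ to $A$ of amount $\delta\ge0$ contingent on $A_i$ replaces $(a_{ij},b_{ij})$ by $(a_{ij}+\delta,b_{ij}-\delta)$ for every $j$. Each such map is a POI-transformation; an OI-transformation is a composition of finitely many POI-transformations (all amounts non-negative). *)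

(* Defs.v *)
From HB Require Import structures.
From mathcomp Require Import all_boot all_order all_algebra.
Set Implicit Arguments. Unset Strict Implicit. Unset Printing Implicit Defensive.
Import Order.TTheory GRing.Theory Num.Theory.
Local Open Scope ring_scope.

(* An n x m 2-person normal form game matrix: entry (i,j) is the pair
   (a_ij, b_ij) of payoffs of the row player A and column player B. *)
Definition game (R : Type) (n m : nat) := 'I_n -> 'I_m -> R * R.

(* Preplay offer by A to B of amount d contingent on B_j. *)
Definition offerA (R : numDomainType) n m (j : 'I_m) (d : R) (M : game R n m)
  : game R n m :=
  fun i' j' => if j' == j then ((M i' j').1 - d, (M i' j').2 + d) else M i' j'.

(* Preplay offer by B to A of amount d contingent on A_i. *)
Definition offerB (R : numDomainType) n m (i : 'I_n) (d : R) (M : game R n m)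
  : game R n m :=
  fun i' j' => if i' == i then ((M i' j').1 + d, (M i' j').2 - d) else M i' j'.

Inductive POI (R : numDomainType) n m : game R n m -> game R n m -> Prop :=
  | POI_A (j : 'I_m) (d : R) (M : game R n m) : 0 <= d -> POI M (offerA j d M)
  | POI_B (i : 'I_n) (d : R) (M : game R n m) : 0 <= d -> POI M (offerB i d M).

Inductive OI (R : numDomainType) n m (M : game R n m) : game R n m -> Prop :=
  | OI_refl : OI M M
  | OI_step (M1 M2 : game R n m) : OI M M1 -> POI M1 M2 -> OI M M2.

(* Main.v *)
Require Import Defs.
From HB Require Import structures.
From mathcomp Require Import all_boot all_order all_algebra.
From mathcomp Require Import ring lra.
From Stdlib Require Import FunctionalExtensionality.
Import Order.TTheory GRing.Theory Num.Theory.
Local Open Scope ring_scope.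

Lemma ord2_cases (i : 'I_2) : i = ord0 \/ i = ord_max.
Proof.
case: i => [[|[|k]] Hk]; [left|right|by []]; exact/val_inj.
Qed.

Lemma fwd (R : realFieldType) (M Mh : game R 2 2) : OI M Mh ->
  ((forall i j : 'I_2, (M i j).1 + (M i j).2 = (Mh i j).1 + (Mh i j).2) /\
   (let c := fun i j : 'I_2 => (Mh i j).1 - (M i j).1 in
    c ord0 ord0 + c ord_max ord_max = c ord0 ord_max + c ord_max ord0)).
Proof.
elim=> [|M1 M2 _ [IH1 IH2] HP]; first by split=> // /=; lra.
case: HP IH1 IH2 => [j d M0 _|i d M0 _] IH1 IH2 /=; split.
- move=> i' j'; rewrite IH1 /offerA; case: (j' == j) => //=; lra.
- move: IH2 => /=; rewrite /offerA.
  by case: (ord2_cases j) => ->; rewrite /=; lra.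
- move=> i' j'; rewrite IH1 /offerB; case: (i' == i) => //=; lra.
- move: IH2 => /=; rewrite /offerB.
  by case: (ord2_cases i) => ->; rewrite /=; lra.
Qed.

Lemma OI_POI (R : numDomainType) n m (M M1 M2 : game R n m) :
  OI M M1 -> POI M1 M2 -> OI M M2.
Proof. move=> H1 H2; exact: OI_step H1 H2. Qed.

Theorem corollary1 (R : realFieldType) (M Mh : game R 2 2) :
  OI M Mh <->
  ((forall i j : 'I_2, (M i j).1 + (M i j).2 = (Mh i j).1 + (Mh i j).2) /\
   (let c := fun i j : 'I_2 => (Mh i j).1 - (M i j).1 in
    c ord0 ord0 + c ord_max ord_max = c ord0 ord_max + c ord_max ord0)).
Proof.
split; first exact: fwd.
move=> [Hs /= Hc].
set c00 := (Mh ord0 ord0).1 - (M ord0 ord0).1.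
set c01 := (Mh ord0 ord_max).1 - (M ord0 ord_max).1.
set c10 := (Mh ord_max ord0).1 - (M ord_max ord0).1.
set t := `|c00| + `|c01| + `|c10|.
have h1 := ler_norm c00; have h2 := ler_norm c01; have h3 := ler_norm c10.
have h1' : - c00 <= `|c00| by rewrite -normrN ler_norm.
have h2' : - c01 <= `|c01| by rewrite -normrN ler_norm.
have h3' : - c10 <= `|c10| by rewrite -normrN ler_norm.
have n1 := normr_ge0 c00; have n2 := normr_ge0 c01; have n3 := normr_ge0 c10.
have E : Mh = offerB ord_max (t + c10) (offerB ord0 (t + c00)
          (offerA ord_max (t + c00 - c01) (offerA ord0 t M))).
  apply: functional_extensionality => i; apply: functional_extensionality => j.
  have e1 := Hs ord0 ord0; have e2 := Hs ord0 ord_max; have e3 := Hs ord_max ord0; have e4 := Hs ord_max ord_max.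
  rewrite /offerA /offerB.
  case: (ord2_cases i) => ->; case: (ord2_cases j) => ->; rewrite /=;
    rewrite [LHS]surjective_pairing; congr (_, _);
    rewrite /c00 /c01 /c10 in Hc *; lra.
rewrite E.
apply: OI_step; last by apply: POI_B; rewrite /t; lra.
apply: OI_step; last by apply: POI_B; rewrite /t; lra.
apply: OI_step; last by apply: POI_A; rewrite /t; lra.
apply: OI_step; last by apply: POI_A; rewrite /t; lra.
exact: OI_refl.
Qed.
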